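(* For $m>2$ there is an injective $\mathcal R$-morphism $g:C_m\to C_2$ such that for all $i,j<m$, \[ g(p_i)\cdot g(q_j)=\delta_{i,j}\quad\text{and}\quad g\Big(\sum_{i<m}q_ip_i\Big)=1. \]
   Context: An $\mathcal R$-dioid is a dioid in which every regular subset of the multiplicative monoid has a supremum $\sum A$ with $\sum(AB)=(\sum A)(\sum B)$ (equivalently a $*$-continuous Kleene algebra); an $\mathcal R$-morphism is a dioid morphism preserving suprema of regular sets; an $\mathcal R$-congruence is a semiring congruence $\rho$ such that regular sets with equal downward closures modulo $\rho$ have congruent suprema. For $k\ge1$, $\Delta_k=\{p_0,\dots,p_{k-1},q_0,\dots,q_{k-1}\}$ and the bra-ket $\mathcal R$-dioid is $C_k=\mathcal R\Delta_k^*/\rho_k$, where $\mathcal R\Delta_k^*$ is the algebra of regular languages over $\Delta_k$ and $\rho_k$ the least $\mathcal R$-congruence containing $p_iq_j=\delta_{i,j}$ ($i,j<k$) and $\sum_{i<k}q_ip_i=1$. In $C_m$, $p_i,q_j$ denote the classes of $\{p_i\},\{q_j\}$; $\delta$ is the Kronecker delta. *)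

(* Defs.v *)
From Stdlib Require List.
From mathcomp Require Import all_boot.
Set Implicit Arguments. Unset Strict Implicit. Unset Printing Implicit Defensive.

(* A monoid is given by a carrier T, an equivalence E (its equality), a product mul
   and a unit one. *)
Inductive rexp (T : Type) : Type :=
  | Rzero
  | Ratom of T
  | Rplus of rexp T & rexp T
  | Rmul of rexp T & rexp T
  | Rstar of rexp T.
Arguments Rzero {T}.

Fixpoint rsem (T : Type) (E : T -> T -> Prop) (mul : T -> T -> T) (one : T)
    (r : rexp T) : T -> Prop :=
  match r with
  | Rzero => fun _ => False
  | Ratom a => fun x => E x a
  | Rplus r1 r2 => fun x => rsem E mul one r1 x \/ rsem E mul one r2 x
  | Rmul r1 r2 => fun x => exists y z,
      [/\ rsem E mul one r1 y, rsem E mul one r2 z & E x (mul y z)]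
  | Rstar r1 => fun x => exists ys : seq T,
      (forall y, List.In y ys -> rsem E mul one r1 y) /\ E x (foldr mul one ys)
  end.

Definition regular_subset (T : Type) (E : T -> T -> Prop) (mul : T -> T -> T)
    (one : T) (A : T -> Prop) : Prop :=
  exists r : rexp T, forall x, A x <-> rsem E mul one r x.

Definition dle (T : Type) (E : T -> T -> Prop) (add : T -> T -> T) (a b : T) :=
  E (add a b) b.

Definition is_sup (T : Type) (E : T -> T -> Prop) (add : T -> T -> T)
    (A : T -> Prop) (s : T) : Prop :=
  (forall a, A a -> dle E add a s) /\
  (forall u, (forall a, A a -> dle E add a u) -> dle E add s u).

(* p_i is inl i, q_i is inr i *)
Definition Delta (k : nat) : Type := ('I_k + 'I_k)%type.

Definition lang (k : nat) := seq (Delta k) -> Prop.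

Definition regular_lang (k : nat) (L : lang k) : Prop :=
  regular_subset (@eq (seq (Delta k))) cat [::] L.

Definition RL (k : nat) := {L : lang k | regular_lang L}.

Definition lang_union k (L1 L2 : lang k) : lang k := fun w => L1 w \/ L2 w.
Definition lang_cat k (L1 L2 : lang k) : lang k :=
  fun w => exists u v, [/\ L1 u, L2 v & w = u ++ v].
Definition lang_empty k : lang k := fun _ => False.
Definition lang_word k (w0 : seq (Delta k)) : lang k := fun w => w = w0.

Lemma regular_union k (L1 L2 : lang k) :
  regular_lang L1 -> regular_lang L2 -> regular_lang (lang_union L1 L2).
Proof.
move=> [r1 H1] [r2 H2]; exists (Rplus r1 r2) => w /=.
by rewrite /lang_union H1 H2.
Qed.

Lemma regular_cat k (L1 L2 : lang k) :
  regular_lang L1 -> regular_lang L2 -> regular_lang (lang_cat L1 L2).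
Proof.
move=> [r1 H1] [r2 H2]; exists (Rmul r1 r2) => w /=; split.
- by move=> [u [v [Hu Hv ->]]]; exists u, v; split; [apply/H1|apply/H2|].
- by move=> [u [v [Hu Hv ->]]]; exists u, v; split; [apply/H1|apply/H2|].
Qed.

Lemma regular_empty k : regular_lang (@lang_empty k).
Proof. by exists Rzero. Qed.

Lemma regular_word k (w0 : seq (Delta k)) : regular_lang (lang_word w0).
Proof. by exists (Ratom w0). Qed.

Definition radd k (x y : RL k) : RL k :=
  exist _ _ (regular_union (proj2_sig x) (proj2_sig y)).
Definition rmul k (x y : RL k) : RL k :=
  exist _ _ (regular_cat (proj2_sig x) (proj2_sig y)).
Definition rzero k : RL k := exist _ _ (@regular_empty k).
Definition rone k : RL k := exist _ _ (@regular_word k [::]).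

Definition rp k (i : 'I_k) : RL k := exist _ _ (regular_word [:: inl i]).
Definition rq k (i : 'I_k) : RL k := exist _ _ (regular_word [:: inr i]).

Definition kdelta k (i j : 'I_k) : RL k := if i == j then rone k else rzero k.

Definition sum_qp k : RL k := \big[@radd k/rzero k]_(i < k) rmul (rq i) (rp i).

Definition downclosure k (rho : RL k -> RL k -> Prop) (A : RL k -> Prop) :
    RL k -> Prop :=
  fun x => exists a, A a /\ rho (radd x a) a.

Definition R_congruence k (rho : RL k -> RL k -> Prop) : Prop :=
  [/\ (forall x, rho x x),
      (forall x y, rho x y -> rho y x),
      (forall x y z, rho x y -> rho y z -> rho x z),
      (forall a a' b b', rho a a' -> rho b b' ->
          rho (radd a b) (radd a' b') /\ rho (rmul a b) (rmul a' b')) &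
      (forall (A B : RL k -> Prop),
          regular_subset (@eq (RL k)) (@rmul k) (rone k) A ->
          regular_subset (@eq (RL k)) (@rmul k) (rone k) B ->
          (forall x, downclosure rho A x <-> downclosure rho B x) ->
          forall s t, is_sup (@eq (RL k)) (@radd k) A s ->
                      is_sup (@eq (RL k)) (@radd k) B t -> rho s t)].

Definition contains_braket k (rho : RL k -> RL k -> Prop) : Prop :=
  (forall i j : 'I_k, rho (rmul (rp i) (rq j)) (kdelta i j)) /\
  rho (sum_qp k) (rone k).

Definition rho_k k (x y : RL k) : Prop :=
  forall rho, R_congruence rho -> contains_braket rho -> rho x y.

(* ---------- C_k = R Delta_k^* / rho_k, presented as a setoid ---------- *)
(* A map C_m -> C_2 is given by a map on representatives respecting rho. *)
Definition R_morphism m n (g : RL m -> RL n) : Prop :=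
  (forall x y, rho_k x y -> rho_k (g x) (g y)) /\
  [/\ rho_k (g (rzero m)) (rzero n),
      rho_k (g (rone m)) (rone n),
      (forall x y, rho_k (g (radd x y)) (radd (g x) (g y))),
      (forall x y, rho_k (g (rmul x y)) (rmul (g x) (g y))) &
      (forall A : RL m -> Prop,
          regular_subset (@rho_k m) (@rmul m) (rone m) A ->
          forall s, is_sup (@rho_k m) (@radd m) A s ->
          is_sup (@rho_k n) (@radd n) (fun y => exists2 x, A x & rho_k y (g x)) (g s))].

Definition C_injective m n (g : RL m -> RL n) : Prop :=
  forall x y, rho_k (g x) (g y) -> rho_k x y.

(* Main.v *)
From HB Require Import structures.
Require Import Defs.
From mathcomp Require Import all_boot.
From Stdlib Require List.
From Stdlib Require Import FunctionalExtensionality PropExtensionality ProofIrrelevance.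
Set Implicit Arguments. Unset Strict Implicit. Unset Printing Implicit Defensive.

Lemma In_map (A B : Type) (f : A -> B) (s : seq A) y :
  List.In y (map f s) <-> exists x, List.In x s /\ y = f x.
Proof.
elim: s => [|a s IH] /=; first by split => // [[x []]].
split.
- case=> [<-|H]; first by exists a; split; [left|].
  have [x [Hx ->]] := proj1 IH H.
  by exists x; split; [right|].
- case=> x [[<-|Hx] E]; first by left; rewrite E.
  by right; apply: (proj2 IH); exists x.
Qed.

Section RMap.
Variables (T1 T2 : Type) (mul1 : T1 -> T1 -> T1) (one1 : T1)
  (mul2 : T2 -> T2 -> T2) (one2 : T2) (G : T1 -> T2).
Hypothesis Gmul : forall a b, G (mul1 a b) = mul2 (G a) (G b).
Hypothesis Gone : G one1 = one2.

Fixpoint rmap (r : rexp T1) : rexp T2 :=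
  match r with
  | Rzero => Rzero
  | Ratom a => Ratom (G a)
  | Rplus r1 r2 => Rplus (rmap r1) (rmap r2)
  | Rmul r1 r2 => Rmul (rmap r1) (rmap r2)
  | Rstar r1 => Rstar (rmap r1)
  end.

Lemma foldr_G xs : foldr mul2 one2 (map G xs) = G (foldr mul1 one1 xs).
Proof. by elim: xs => [|x xs IH] /=; rewrite ?Gone // IH Gmul. Qed.

Lemma rsem_map r y :
  rsem (@eq T2) mul2 one2 (rmap r) y <-> exists x, rsem (@eq T1) mul1 one1 r x /\ y = G x.
Proof.
elim: r y => [|a|r1 IH1 r2 IH2|r1 IH1 r2 IH2|r1 IH1] y /=.
- by split => // [[x []]].
- by split => [->|[x [-> ->]]]; first by exists a.
- rewrite IH1 IH2; split.
  + by case=> [[x [Hx ->]]|[x [Hx ->]]]; exists x; split; [left|  |right|].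
  + by case=> x [[Hx|Hx] ->]; [left|right]; exists x.
- split.
  + case=> [y1 [y2 [/IH1 [x1 [H1 ->]] /IH2 [x2 [H2 ->]] ->]]].
    by exists (mul1 x1 x2); split; [exists x1, x2|rewrite Gmul].
  + case=> x [[x1 [x2 [H1 H2 ->]]] ->]; exists (G x1), (G x2); split.
    * by apply/IH1; exists x1.
    * by apply/IH2; exists x2.
    * by rewrite Gmul.
- split.
  + case=> ys [Hys ->].
    have [xs [Hxs ->]] : exists xs, (forall x, List.In x xs -> rsem (@eq T1) mul1 one1 r1 x)
                                   /\ ys = map G xs.
      elim: ys Hys => [|y0 ys IH] Hys; first by exists [::].
      have [x0 [Hx0 ->]] : exists x, rsem (@eq T1) mul1 one1 r1 x /\ y0 = G x.
        by apply/IH1; apply: Hys; left.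
      have [xs [Hxs ->]] := IH (fun y Hy => Hys y (or_intror Hy)).
      exists (x0 :: xs); split => //= x [<-|Hx] //; exact: Hxs.
    by exists (foldr mul1 one1 xs); split; [exists xs|rewrite foldr_G].
  + case=> x [[xs [Hxs ->]] ->]; exists (map G xs); split; last by rewrite foldr_G.
    move=> y0 /In_map [x' [Hx' ->]]; apply/IH1; exists x'; split => //; exact: Hxs.
Qed.
End RMap.

Lemma regular_ext k (L L' : lang k) : (forall w, L w <-> L' w) -> regular_lang L -> regular_lang L'.
Proof. move=> H [r Hr]; exists r => w; rewrite -H; exact: Hr. Qed.

Section Basics.
Variable k : nat.
Implicit Types x y z : RL k.

Lemma RL_ext x y : (forall w, sval x w <-> sval y w) -> x = y.
Proof.
case: x => L1 H1; case: y => L2 H2 /= H.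
have E : L1 = L2.
  by apply: functional_extensionality => w; apply: propositional_extensionality.
subst L2; f_equal; apply: proof_irrelevance.
Qed.

Definition sing (w : seq (Delta k)) : RL k := exist _ _ (regular_word w).

Lemma raddC x y : radd x y = radd y x.
Proof. by apply: RL_ext => w /=; rewrite /lang_union; tauto. Qed.
Lemma raddA x y z : radd x (radd y z) = radd (radd x y) z.
Proof. by apply: RL_ext => w /=; rewrite /lang_union; tauto. Qed.
Lemma raddxx x : radd x x = x.
Proof. by apply: RL_ext => w /=; rewrite /lang_union; tauto. Qed.
Lemma radd0r x : radd (rzero k) x = x.
Proof. by apply: RL_ext => w /=; rewrite /lang_union /lang_empty; tauto. Qed.
Lemma raddr0 x : radd x (rzero k) = x.
Proof. by rewrite raddC radd0r. Qed.

Lemma rmulA x y z : rmul x (rmul y z) = rmul (rmul x y) z.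
Proof.
apply: RL_ext => w /=; rewrite /lang_cat; split.
- case=> u [v [Hu [u1 [v1 [Hu1 Hv1 ->]]] ->]].
  by exists (u ++ u1), v1; split => //; [exists u, u1|rewrite catA].
- case=> u [v [[u1 [v1 [Hu1 Hv1 ->]]] Hv ->]].
  by exists u1, (v1 ++ v); split => //; [exists v1, v|rewrite catA].
Qed.
Lemma rmul1r x : rmul (rone k) x = x.
Proof.
apply: RL_ext => w /=; rewrite /lang_cat /lang_word; split.
- by case=> u [v [-> Hv ->]].
- by move=> Hw; exists [::], w.
Qed.
Lemma rmulr1 x : rmul x (rone k) = x.
Proof.
apply: RL_ext => w /=; rewrite /lang_cat /lang_word; split.
- by case=> u [v [Hu -> ->]]; rewrite cats0.
- by move=> Hw; exists w, [::]; rewrite cats0.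
Qed.
Lemma rmul0r x : rmul (rzero k) x = rzero k.
Proof. by apply: RL_ext => w /=; rewrite /lang_cat /lang_empty; split => // [[u [v []]]]. Qed.
Lemma rmulr0 x : rmul x (rzero k) = rzero k.
Proof. by apply: RL_ext => w /=; rewrite /lang_cat /lang_empty; split => // [[u [v []]]]. Qed.
Lemma rmulDl x y z : rmul (radd x y) z = radd (rmul x z) (rmul y z).
Proof.
apply: RL_ext => w /=; rewrite /lang_cat /lang_union; split.
- by case=> u [v [[Hu|Hu] Hv ->]]; [left|right]; exists u, v.
- by case=> [[u [v [Hu Hv ->]]]|[u [v [Hu Hv ->]]]]; exists u, v; split => //; [left|right].
Qed.
Lemma rmulDr x y z : rmul x (radd y z) = radd (rmul x y) (rmul x z).
Proof.
apply: RL_ext => w /=; rewrite /lang_cat /lang_union; split.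
- by case=> u [v [Hu [Hv|Hv] ->]]; [left|right]; exists u, v.
- by case=> [[u [v [Hu Hv ->]]]|[u [v [Hu Hv ->]]]]; exists u, v; split => //; [left|right].
Qed.
Lemma sing_cat a b : rmul (sing a) (sing b) = sing (a ++ b).
Proof.
apply: RL_ext => w /=; rewrite /lang_cat /lang_word; split.
- by case=> u [v [-> -> ->]].
- by move=> ->; exists a, b.
Qed.
Lemma sing_nil : sing [::] = rone k. Proof. by []. Qed.

Lemma sval_sing w v : sval (sing w) v <-> v = w. Proof. by []. Qed.

End Basics.

HB.instance Definition _ k := Monoid.isComLaw.Build (RL k) (rzero k) (@radd k)
  (fun x y z => @raddA k x y z) (@raddC k) (@radd0r k).

Section Basics2.
Variable k : nat.
Implicit Types x y z : RL k.

Lemma sval_big (I : Type) (r : seq I) (F : I -> RL k) w :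
  sval (\big[@radd k/rzero k]_(i <- r) F i) w <-> exists i, List.In i r /\ sval (F i) w.
Proof.
elim: r => [|i r IH]; first by rewrite big_nil; split => // [[i []]].
rewrite big_cons /= /lang_union IH; split.
- by case=> [H|[j [Hj H]]]; [exists i; split; [left|]|exists j; split; [right|]].
- by case=> j [[<-|Hj] H]; [left|right; exists j].
Qed.

Lemma rmul_bigl (I : Type) (r : seq I) (F : I -> RL k) c :
  rmul c (\big[@radd k/rzero k]_(i <- r) F i) = \big[@radd k/rzero k]_(i <- r) rmul c (F i).
Proof.
elim: r => [|i r IH]; first by rewrite !big_nil rmulr0.
by rewrite !big_cons rmulDr IH.
Qed.
Lemma rmul_bigr (I : Type) (r : seq I) (F : I -> RL k) c :
  rmul (\big[@radd k/rzero k]_(i <- r) F i) c = \big[@radd k/rzero k]_(i <- r) rmul (F i) c.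
Proof.
elim: r => [|i r IH]; first by rewrite !big_nil rmul0r.
by rewrite !big_cons rmulDl IH.
Qed.

Definition lstar (L : lang k) : lang k :=
  fun w => exists ws, (forall v, List.In v ws -> L v) /\ w = foldr cat [::] ws.

Lemma regular_star (L : lang k) : regular_lang L -> regular_lang (lstar L).
Proof.
move=> [r Hr]; exists (Rstar r) => w /=; rewrite /lstar; split.
- by case=> ws [Hws ->]; exists ws; split => // v /Hws /Hr.
- by case=> ws [Hws ->]; exists ws; split => // v /Hws /Hr.
Qed.

Lemma regular_bigunion (r : rexp (RL k)) :
  regular_lang (fun w => exists a, rsem (@eq (RL k)) (@rmul k) (rone k) r a /\ sval a w).
Proof.
elim: r => [|a|r1 IH1 r2 IH2|r1 IH1 r2 IH2|r1 IH1] /=.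
- by apply: (regular_ext _ (@regular_empty k)) => w; split => // [[a []]].
- apply: (regular_ext _ (proj2_sig a)) => w; split; first by move=> H; exists a.
  by case=> b [-> H].
- apply: (regular_ext _ (regular_union IH1 IH2)) => w; rewrite /lang_union; split.
  + by case=> [[b [Hb H]]|[b [Hb H]]]; exists b; split => //; [left|right].
  + by case=> b [[Hb|Hb] H]; [left|right]; exists b.
- apply: (regular_ext _ (regular_cat IH1 IH2)) => w; rewrite /lang_cat; split.
  + case=> u [v [[b1 [H1 Hu]] [b2 [H2 Hv]] ->]].
    by exists (rmul b1 b2); split; [exists b1, b2|exists u, v].
  + by case=> b [[b1 [b2 [H1 H2 ->]]] [u [v [Hu Hv ->]]]]; exists u, v; split;
      [exists b1|exists b2|].
- apply: (regular_ext _ (regular_star IH1)) => w; rewrite /lstar; split.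
  + case=> ws [Hws ->].
    elim: ws Hws => [|v ws IH] Hws.
      by exists (rone k); split => //; exists [::].
    have [b [Hb Hv]] := Hws v (or_introl erefl).
    have [c [[ys [Hys ->]] Hc]] := IH (fun v' Hv' => Hws v' (or_intror Hv')).
    exists (rmul b (foldr (@rmul k) (rone k) ys)); split.
      by exists (b :: ys); split => // y [<-|Hy] //; exact: Hys.
    by exists v, (foldr cat [::] ws).
  + case=> b [[ys [Hys ->]] Hw].
    elim: ys w Hys Hw => [|y ys IH] w Hys /=.
      by move=> ->; exists [::].
    case=> u [v [Hu Hv ->]].
    have [ws [Hws ->]] := IH v (fun y' Hy' => Hys y' (or_intror Hy')) Hv.
    exists (u :: ws); split => // v' [<-|Hv'] //; last exact: Hws.
    by exists y; split => //; apply: Hys; left.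
Qed.

Definition bigU (r : rexp (RL k)) : RL k := exist _ _ (regular_bigunion r).

Lemma is_sup_union (A : RL k -> Prop) s :
  (forall w, sval s w <-> exists a, A a /\ sval a w) -> is_sup (@eq (RL k)) (@radd k) A s.
Proof.
move=> Hs; split.
- move=> a Ha; apply: RL_ext => w /=; rewrite /lang_union Hs; split; last by right.
  by case=> // H; exists a.
- move=> u Hu; apply: RL_ext => w /=; rewrite /lang_union Hs; split; last by right.
  case=> // [[a [Ha H]]]; rewrite -(Hu a Ha) /=; by left.
Qed.

Lemma sup_union (A : RL k -> Prop) s :
  regular_subset (@eq (RL k)) (@rmul k) (rone k) A -> is_sup (@eq (RL k)) (@radd k) A s ->
  forall w, sval s w <-> exists a, A a /\ sval a w.
Proof.
move=> [r Hr] [Hub Hl] w.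
have HU : forall w, sval (bigU r) w <-> exists a, A a /\ sval a w.
  by move=> w'; rewrite /=; split; case=> a [Ha H]; exists a; split => //; apply/Hr.
split.
- move=> Hw; apply/HU.
  have E := Hl (bigU r) (fun a Ha => proj1 (is_sup_union HU) a Ha).
  by rewrite -E /= /lang_union; left.
- case=> a [Ha H]; rewrite -(Hub a Ha) /=; by left.
Qed.

End Basics2.

From Stdlib Require Import FunctionalExtensionality PropExtensionality ProofIrrelevance.
Set Implicit Arguments. Unset Strict Implicit. Unset Printing Implicit Defensive.

Definition le k (rho : RL k -> RL k -> Prop) (x y : RL k) := rho (radd x y) y.

Section Cong.
Variable k : nat.
Variable rho : RL k -> RL k -> Prop.
Hypothesis HR : R_congruence rho.
Implicit Types x y z u : RL k.

Lemma crefl x : rho x x. Proof. by case: HR => H _ _ _ _. Qed.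
Lemma csym x y : rho x y -> rho y x. Proof. by case: HR => _ H _ _ _; apply: H. Qed.
Lemma ctrans x y z : rho x y -> rho y z -> rho x z. Proof. by case: HR => _ _ H _ _; apply: H. Qed.
Lemma radd_c a a' b b' : rho a a' -> rho b b' -> rho (radd a b) (radd a' b').
Proof. by case: HR => _ _ _ H _ Ha Hb; case: (H _ _ _ _ Ha Hb). Qed.
Lemma rmul_c a a' b b' : rho a a' -> rho b b' -> rho (rmul a b) (rmul a' b').
Proof. by case: HR => _ _ _ H _ Ha Hb; case: (H _ _ _ _ Ha Hb). Qed.
Lemma rho_eq x y : x = y -> rho x y. Proof. by move=> ->; apply: crefl. Qed.
Lemma rmul_cl a b b' : rho b b' -> rho (rmul a b) (rmul a b').
Proof. by move=> H; apply: rmul_c => //; apply: crefl. Qed.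
Lemma rmul_cr a a' b : rho a a' -> rho (rmul a b) (rmul a' b).
Proof. by move=> H; apply: rmul_c => //; apply: crefl. Qed.
Lemma radd_cl a b b' : rho b b' -> rho (radd a b) (radd a b').
Proof. by move=> H; apply: radd_c => //; apply: crefl. Qed.
Lemma radd_cr a a' b : rho a a' -> rho (radd a b) (radd a' b).
Proof. by move=> H; apply: radd_c => //; apply: crefl. Qed.

Lemma cle_refl x : le rho x x. Proof. by rewrite /le raddxx; apply: crefl. Qed.
Lemma cle_trans x y z : le rho x y -> le rho y z -> le rho x z.
Proof.
rewrite /le => Hxy Hyz.
apply: (@ctrans _ (radd x (radd y z)) _); first by apply: radd_cl; apply: csym.
rewrite raddA; apply: (@ctrans _ (radd y z) _) Hyz; exact: radd_cr.
Qed.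
Lemma cle_antisym x y : le rho x y -> le rho y x -> rho x y.
Proof.
rewrite /le => H1 H2; apply: (@ctrans _ (radd y x) _); first exact: csym.
by rewrite raddC.
Qed.
Lemma cle_add x y z : le rho x z -> le rho y z -> le rho (radd x y) z.
Proof.
rewrite /le => H1 H2; rewrite -raddA; apply: (@ctrans _ (radd x z) _) H1.
exact: radd_cl.
Qed.
Lemma cle_sub x y : (forall w, sval x w -> sval y w) -> le rho x y.
Proof.
move=> H; rewrite /le; apply: rho_eq; apply: RL_ext => w /=; rewrite /lang_union.
by split => [[/H|]|]; [|  |right].
Qed.
Lemma cle_zero x : le rho (rzero k) x. Proof. by apply: cle_sub. Qed.
Lemma cle_rhol x x' y : rho x x' -> le rho x' y -> le rho x y.
Proof. by rewrite /le => H1 H2; apply: ctrans H2; apply: radd_cr. Qed.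
Lemma cle_rhor x y y' : rho y y' -> le rho x y -> le rho x y'.
Proof.
rewrite /le => H1 H2; apply: (@ctrans _ y _) => //.
apply: (@ctrans _ (radd x y) _) => //; apply: radd_cl; exact: csym.
Qed.
Lemma cle_of_rho x y : rho x y -> le rho x y.
Proof. by move=> H; apply: cle_rhol H _; apply: cle_refl. Qed.
Lemma cle_mulr x y c : le rho x y -> le rho (rmul x c) (rmul y c).
Proof. by rewrite /le -rmulDl => H; apply: rmul_cr. Qed.
Lemma cle_mull x y c : le rho x y -> le rho (rmul c x) (rmul c y).
Proof. by rewrite /le -rmulDr => H; apply: rmul_cl. Qed.
Lemma cle_mul x y x' y' : le rho x y -> le rho x' y' -> le rho (rmul x x') (rmul y y').
Proof. by move=> H1 H2; apply: cle_trans (cle_mulr _ H1) (cle_mull _ H2). Qed.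

Lemma cle_big (I : Type) (r : seq I) (F : I -> RL k) u :
  (forall i, List.In i r -> le rho (F i) u) -> le rho (\big[@radd k/rzero k]_(i <- r) F i) u.
Proof.
elim: r => [|i r IH] H; first by rewrite big_nil; apply: cle_zero.
rewrite big_cons; apply: cle_add; first by apply: H; left.
by apply: IH => j Hj; apply: H; right.
Qed.

Lemma cle_in_big (I : Type) (r : seq I) (F : I -> RL k) i :
  List.In i r -> le rho (F i) (\big[@radd k/rzero k]_(i <- r) F i).
Proof. by move=> Hi; apply: cle_sub => w Hw; apply/sval_big; exists i. Qed.

Lemma dc_cofinal (A B : RL k -> Prop) :
  (forall a, A a -> exists2 b, B b & le rho a b) ->
  forall x, downclosure rho A x -> downclosure rho B x.
Proof.
move=> H x [a [Ha Hxa]]; have [b Hb Hab] := H a Ha.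
by exists b; split => //; apply: cle_trans Hab.
Qed.

Lemma dc_self (A : RL k -> Prop) a : A a -> downclosure rho A a.
Proof. by move=> Ha; exists a; split => //; apply: cle_refl. Qed.

Lemma SUP (r : rexp (RL k)) s u :
  (forall w, sval s w <-> exists a, rsem (@eq (RL k)) (@rmul k) (rone k) r a /\ sval a w) ->
  (forall a, rsem (@eq (RL k)) (@rmul k) (rone k) r a -> le rho a u) -> le rho s u.
Proof.
move=> Hs Hub; case: HR => _ _ _ _ Hsup.
apply: (Hsup (fun a => rsem (@eq (RL k)) (@rmul k) (rone k) (Rplus r (Ratom u)) a)
              (fun a => rsem (@eq (RL k)) (@rmul k) (rone k) (Ratom u) a)).
- by exists (Rplus r (Ratom u)).
- by exists (Ratom u).
- move=> x; split; apply: dc_cofinal => a /=.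
  + by case=> [Ha|->]; exists u => //; [apply: Hub|apply: cle_refl].
  + by move=> ->; exists u; [right|apply: cle_refl].
- apply: is_sup_union => w /=; rewrite /lang_union Hs; split.
  + case=> [[a [Ha H]]|H]; first by exists a; split => //; left.
    by exists u; split => //; right.
  + by case=> a [[Ha|->] H]; [left; exists a|right].
- apply: is_sup_union => w /=; split; first by move=> H; exists u.
  by case=> a [-> H].
Qed.

Lemma GSUP x u : (forall w, sval x w -> le rho (sing w) u) -> le rho x u.
Proof.
move=> H; case: (proj2_sig x) => r Hr.
pose R := rmap (@sing k) r.
have HR' := rsem_map (fun a b => esym (@sing_cat k a b)) (@sing_nil k) r.
apply: (SUP (r := R)).
- move=> w; split.
  + move=> Hw; exists (sing w); split => //; apply/HR'; exists w; split => //.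
    exact/Hr.
  + case=> a [/HR' [w' [Hw' ->]] /= ->]; exact/Hr.
- by move=> a /HR' [w' [Hw' ->]]; apply: H; apply/Hr.
Qed.

End Cong.

Section RhoK.
Variable k : nat.

Lemma rho_k_le (rho : RL k -> RL k -> Prop) x y :
  R_congruence rho -> contains_braket rho -> rho_k x y -> rho x y.
Proof. by move=> H1 H2 H; apply: H. Qed.

Lemma rho_k_cong : R_congruence (@rho_k k).
Proof.
split.
- by move=> x rho H _; apply: crefl.
- by move=> x y H rho H1 H2; apply: csym => //; apply: H.
- by move=> x y z H H' rho H1 H2; apply: ctrans (H _ H1 H2) (H' _ H1 H2).
- by move=> a a' b b' Ha Hb; split => rho H1 H2;
    [apply: radd_c|apply: rmul_c] => //; [apply: Ha|apply: Hb|apply: Ha|apply: Hb].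
- move=> A B HA HB Hdc s t Hs Ht rho H1 H2.
  case: (H1) => _ _ _ _ Hsup; apply: (Hsup A B HA HB) => //.
  have cof : forall (A B : RL k -> Prop), (forall x, downclosure (@rho_k k) A x -> downclosure (@rho_k k) B x) ->
      forall x, downclosure rho A x -> downclosure rho B x.
    move=> A' B' H x [a [Ha Hxa]].
    have [b [Hb Hab]] := H a (ex_intro _ a (conj Ha (fun rho' H1' _ => cle_refl H1' a))).
    by exists b; split => //; apply: (cle_trans H1 Hxa); apply: (Hab _ H1 H2).
  by move=> x; split; apply: cof => y; [apply: (proj1 (Hdc y))|apply: (proj2 (Hdc y))].
Qed.

Lemma rho_k_braket : contains_braket (@rho_k k).
Proof. by split => [i j|] rho _ [H1 H2]. Qed.

End RhoK.

Set Implicit Arguments. Unset Strict Implicit. Unset Printing Implicit Defensive.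

Lemma In_mem (T : eqType) (x : T) (s : seq T) : x \in s -> List.In x s.
Proof. by elim: s => //= y s IH; rewrite inE => /orP [/eqP ->|/IH]; [left|right]. Qed.

Lemma In_enum (T : finType) (x : T) : List.In x (index_enum T).
Proof. by apply: In_mem; rewrite mem_index_enum. Qed.

Section Words.
Variable k : nat.
Variable rho : RL k -> RL k -> Prop.
Hypothesis HR : R_congruence rho.
Hypothesis HB : contains_braket rho.

Definition Qw (u : seq 'I_k) : seq (Delta k) := map inr u.
Definition Pw (v : seq 'I_k) : seq (Delta k) := map inl v.

Lemma canc a b (i j : 'I_k) :
  rho (sing (a ++ [:: inl i; inr j] ++ b)) (if i == j then sing (a ++ b) else rzero k).
Proof.
have -> : sing (a ++ [:: inl i; inr j] ++ b) = rmul (sing a) (rmul (rmul (rp i) (rq j)) (sing b)).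
  by rewrite /rp /rq -/(sing _) -/(sing _) !sing_cat.
apply: (@ctrans _ _ HR _ (rmul (sing a) (rmul (kdelta i j) (sing b)))).
  by apply: rmul_cl => //; apply: rmul_cr => //; case: HB => H _; apply: H.
rewrite /kdelta; case: (i == j); first by rewrite rmul1r sing_cat; apply: crefl.
by rewrite rmul0r rmulr0; apply: crefl.
Qed.

Lemma expand a b :
  rho (sing (a ++ b)) (\big[@radd k/rzero k]_(i < k) sing (a ++ [:: inr i; inl i] ++ b)).
Proof.
have -> : sing (a ++ b) = rmul (sing a) (rmul (rone k) (sing b)) by rewrite rmul1r sing_cat.
apply: (@ctrans _ _ HR _ (rmul (sing a) (rmul (sum_qp k) (sing b)))).
  by apply: rmul_cl => //; apply: rmul_cr => //; case: HB => _ H; apply: csym.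
rewrite /sum_qp rmul_bigr rmul_bigl; apply: rho_eq => //; apply: eq_bigr => i _.
by rewrite /rp /rq -/(sing _) -/(sing _) !sing_cat.
Qed.

Lemma expandQP u v :
  rho (sing (Qw u ++ Pw v)) (\big[@radd k/rzero k]_(i < k) sing (Qw (rcons u i) ++ Pw (i :: v))).
Proof.
apply: (@ctrans _ _ HR _ _ _ (expand _ _)); apply: rho_eq => //; apply: eq_bigr => i _.
by rewrite /Qw /Pw map_rcons -cats1 /= -catA.
Qed.

Lemma le_ext u v s : le rho (sing (Qw (u ++ s) ++ Pw (rev s ++ v))) (sing (Qw u ++ Pw v)).
Proof.
elim/last_ind: s => [|s i IH]; first by rewrite cats0; apply: cle_refl.
apply: (cle_trans HR _ IH).
apply: (cle_rhor HR (csym HR (expandQP _ _))).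
have -> : Qw (u ++ rcons s i) ++ Pw (rev (rcons s i) ++ v) = Qw (rcons (u ++ s) i) ++ Pw (i :: (rev s ++ v)).
  by rewrite rev_rcons rcons_cat.
exact: (@cle_in_big _ _ HR _ (index_enum 'I_k) (fun i => sing (Qw (rcons (u ++ s) i) ++ Pw (i :: (rev s ++ v)))) i (In_enum i)).
Qed.


Definition nstep (st : option (seq 'I_k * seq 'I_k)) (x : Delta k) : option (seq 'I_k * seq 'I_k) :=
  match st with
  | None => None
  | Some (u, vr) =>
    match x with
    | inl i => Some (u, i :: vr)
    | inr i => match vr with
               | [::] => Some (rcons u i, [::])
               | j :: vr' => if j == i then Some (u, vr') else None
               end
    end
  end.

Definition nfsem (st : option (seq 'I_k * seq 'I_k)) : RL k :=
  match st with None => rzero k | Some (u, vr) => sing (Qw u ++ Pw (rev vr)) end.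

Definition nf (w : seq (Delta k)) := foldl nstep (Some ([::], [::])) w.

Lemma nstep_ok st x : rho (rmul (nfsem st) (sing [:: x])) (nfsem (nstep st x)).
Proof.
case: st => [[u vr]|] /=; last by rewrite rmul0r; apply: crefl.
rewrite sing_cat; case: x => i.
- by rewrite /= rev_cons /Pw map_rcons -cats1 catA; apply: crefl.
- case: vr => [|j vr] /=.
  + by rewrite /= /Qw map_rcons -cats1 !cats0; apply: crefl.
  + rewrite /= rev_cons /Pw map_rcons -cats1 -!catA /=.
    have := canc (Qw u ++ map inl (rev vr)) [::] j i.
    rewrite !cats0 -!catA /=; case: (j == i) => //.
Qed.

Lemma nf_ok w : rho (sing w) (nfsem (nf w)).
Proof.
elim/last_ind: w => [|w x IH]; first by apply: crefl.
rewrite /nf foldl_rcons -/(nf w) -cats1 -sing_cat.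
apply: (ctrans HR _ (nstep_ok _ _)); exact: rmul_cr.
Qed.

End Words.

Section Morph.
Variables (k n : nat) (f : Delta k -> seq (Delta n)).

Definition hom (w : seq (Delta k)) : seq (Delta n) := flatten (map f w).

Lemma hom_cat a b : hom (a ++ b) = hom a ++ hom b.
Proof. by rewrite /hom map_cat flatten_cat. Qed.

Definition gl (L : lang k) : lang n := fun w' => exists w, L w /\ w' = hom w.

Lemma regular_gl (L : lang k) : regular_lang L -> regular_lang (gl L).
Proof.
move=> [r Hr]; exists (rmap hom r) => w'.
rewrite (rsem_map (mul1 := cat) (one1 := [::]) (mul2 := cat) (one2 := [::]) hom_cat) //.
by rewrite /gl; split; case=> w [Hw ->]; exists w; split => //; apply/Hr.
Qed.

Definition gmap (x : RL k) : RL n := exist _ _ (regular_gl (proj2_sig x)).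

Lemma sval_gmap x w' : sval (gmap x) w' <-> exists w, sval x w /\ w' = hom w.
Proof. by []. Qed.

Lemma gmap_add x y : gmap (radd x y) = radd (gmap x) (gmap y).
Proof.
apply: RL_ext => w /=; rewrite /gl /lang_union; split.
- by case=> v [[H|H] ->]; [left|right]; exists v.
- by case=> [[v [H ->]]|[v [H ->]]]; exists v; split => //; [left|right].
Qed.

Lemma gmap_mul x y : gmap (rmul x y) = rmul (gmap x) (gmap y).
Proof.
apply: RL_ext => w /=; rewrite /gl /lang_cat; split.
- case=> v [[a [b [Ha Hb ->]]] ->]; exists (hom a), (hom b); rewrite hom_cat.
  by split => //; [exists a|exists b].
- case=> a' [b' [[a [Ha ->]] [b [Hb ->]] ->]]; exists (a ++ b).
  by rewrite hom_cat; split => //; exists a, b.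
Qed.

Lemma gmap_zero : gmap (rzero k) = rzero n.
Proof. by apply: RL_ext => w /=; rewrite /gl /lang_empty; split => // [[v []]]. Qed.

Lemma gmap_sing w : gmap (sing w) = sing (hom w).
Proof.
apply: RL_ext => w' /=; rewrite /gl /lang_word; split; first by case=> v [-> ->].
by move=> ->; exists w.
Qed.

Lemma gmap_one : gmap (rone k) = rone n.
Proof. by rewrite -!sing_nil gmap_sing. Qed.

Lemma gmap_big (I : Type) (r : seq I) (F : I -> RL k) :
  gmap (\big[@radd k/rzero k]_(i <- r) F i) = \big[@radd n/rzero n]_(i <- r) gmap (F i).
Proof.
elim: r => [|i r IH]; first by rewrite !big_nil gmap_zero.
by rewrite !big_cons gmap_add IH.
Qed.

Lemma gmap_sub x y : (forall w, sval x w -> sval y w) -> forall w, sval (gmap x) w -> sval (gmap y) w.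
Proof. by move=> H w [v [Hv ->]]; exists v; split => //; apply: H. Qed.

End Morph.


Set Implicit Arguments. Unset Strict Implicit. Unset Printing Implicit Defensive.

Definition b0 : 'I_2 := ord0.
Definition b1 : 'I_2 := ord_max.

Lemma rcons_nseq T n (x : T) : rcons (nseq n x) x = nseq n.+1 x.
Proof. by elim: n => //= n ->. Qed.

Section Cancel2.
Variable rho : RL 2 -> RL 2 -> Prop.
Hypothesis HR : R_congruence rho.
Hypothesis HB : contains_braket rho.

Lemma cancel_same (l : seq 'I_2) a b :
  rho (sing (a ++ Pw (rev l) ++ Qw l ++ b)) (sing (a ++ b)).
Proof.
elim: l a b => [|x l IH] a b; first by apply: crefl.
rewrite rev_cons /Pw map_rcons -cats1 /=.
have := canc HR HB (a ++ Pw (rev l)) (Qw l ++ b) x x; rewrite eqxx => H.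
apply: (ctrans HR _ (IH a b)); move: H; rewrite /Pw -!catA /=; exact.
Qed.

Lemma cancel_diff c x y d1 d2 : x != y ->
  rho (sing (Pw (rev (c ++ x :: d1)) ++ Qw (c ++ y :: d2))) (rzero 2).
Proof.
move=> Hxy.
have -> : Pw (rev (c ++ x :: d1)) ++ Qw (c ++ y :: d2) =
   (Pw (rev d1) ++ [:: inl x]) ++ Pw (rev c) ++ Qw c ++ (inr y :: Qw d2).
  by rewrite rev_cat rev_cons /Pw /Qw -cats1 !map_cat /= -!catA.
apply: (ctrans HR (cancel_same _ _ _)).
have := canc HR HB (Pw (rev d1)) (Qw d2) x y; rewrite (negbTE Hxy) -catA; exact.
Qed.

End Cancel2.

Section Code.
Variable m : nat.

Definition code (i : 'I_m) : seq 'I_2 := if i < m.-1 then rcons (nseq i b1) b0 else nseq i b1.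

Definition fg (x : Delta m) : seq (Delta 2) :=
  match x with inl i => Pw (rev (code i)) | inr i => Qw (code i) end.

Definition G := gmap fg.

Lemma G_sing w : G (sing w) = sing (hom fg w). Proof. exact: gmap_sing. Qed.

Lemma hom1 x : hom fg [:: x] = fg x. Proof. by rewrite /hom /= cats0. Qed.

Lemma code_lt (i j : 'I_m) : i < j ->
  code i = nseq i b1 ++ [:: b0] /\ exists d, code j = nseq i b1 ++ b1 :: d.
Proof.
move=> Hij; have Hi : i < m.-1.
  by have := ltn_ord j; case: m i j Hij => // m' i j /= Hij Hj; apply: leq_trans Hij _.
split; first by rewrite /code Hi cats1.
have Ej : nseq j b1 = nseq i b1 ++ b1 :: nseq (j - i.+1) b1.
  by rewrite -[in LHS](subnKC Hij) nseqD -rcons_nseq -cats1 -catA.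
rewrite /code; case: (j < m.-1); last by exists (nseq (j - i.+1) b1).
by rewrite Ej rcons_cat; eexists.
Qed.

Section C2.
Variable rho : RL 2 -> RL 2 -> Prop.
Hypothesis HR : R_congruence rho.
Hypothesis HB : contains_braket rho.

Lemma G_braket (i j : 'I_m) :
  rho (rmul (G (rp i)) (G (rq j))) (if i == j then rone 2 else rzero 2).
Proof.
rewrite /rp /rq -/(sing _) -/(sing _) !G_sing !hom1 /= sing_cat.
case: (eqVneq i j) => [<-|Hij].
  by have := cancel_same HR HB (code i) [::] [::]; rewrite cats0.
have [Hlt|Hgt] := ltnP i j.
- have [-> [d ->]] := code_lt Hlt.
  by apply: cancel_diff => //.
- have Hlt : j < i by rewrite ltn_neqAle Hgt andbT; apply: contra_neq Hij => /val_inj ->.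
  have [-> [d ->]] := code_lt Hlt.
  by apply: cancel_diff.
Qed.

Lemma tele t : rho (rone 2) (radd (\big[@radd 2/rzero 2]_(i < t)
     sing (Qw (rcons (nseq i b1) b0) ++ Pw (b0 :: nseq i b1)))
     (sing (Qw (nseq t b1) ++ Pw (nseq t b1)))).
Proof.
elim: t => [|t IH]; first by rewrite big_ord0 radd0r; apply: crefl.
apply: (ctrans HR IH); rewrite big_ord_recr /= -raddA; apply: radd_cl => //.
apply: (ctrans HR (expandQP HR HB _ _)).
rewrite big_ord_recr big_ord_recr big_ord0 /=.
have -> : widen_ord (leqnSn 1) ord_max = b0 by apply: val_inj.
have -> : (ord_max : 'I_2) = b1 by [].
rewrite rcons_nseq; apply: rho_eq => //; apply: RL_ext => w /=; rewrite /lang_union /lang_empty.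
tauto.

Qed.

End C2.
End Code.

Lemma G_rq_rp m (i : 'I_m) : G (rmul (rq i) (rp i)) = sing (Qw (code i) ++ Pw (rev (code i))).
Proof. by rewrite /rp /rq -/(sing _) -/(sing _) sing_cat G_sing /hom /= cats0. Qed.

Lemma G_sum m rho : R_congruence rho -> contains_braket rho -> 0 < m ->
  rho (G (sum_qp m)) (rone 2).
Proof.
move=> HR HB; case: m => // m' _.
have -> : G (sum_qp m'.+1) = \big[@radd 2/rzero 2]_(i < m'.+1) G (rmul (rq i) (rp i)).
  by rewrite /sum_qp /G gmap_big.
under eq_bigr => i _ do rewrite G_rq_rp.
rewrite big_ord_recr /=; apply: csym => //; apply: (ctrans HR (tele HR HB m')).
apply: rho_eq => //; congr radd.
- apply: eq_bigr => i _; rewrite /code /= ltn_ord rev_rcons rev_nseq.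
  by [].
- by rewrite /code /= ltnn rev_nseq.
Qed.

Set Implicit Arguments. Unset Strict Implicit. Unset Printing Implicit Defensive.

Section RsemE.
Variable k : nat.
Variable rho : RL k -> RL k -> Prop.
Hypothesis HR : R_congruence rho.

Lemma rsem_eq_E r x : rsem (@eq (RL k)) (@rmul k) (rone k) r x -> rsem rho (@rmul k) (rone k) r x.
Proof.
elim: r x => [|a|r1 IH1 r2 IH2|r1 IH1 r2 IH2|r1 IH1] x /=.
- by [].
- by move=> ->; apply: crefl.
- by case=> H; [left; apply: IH1|right; apply: IH2].
- by case=> y [z [Hy Hz ->]]; exists y, z; split; [apply: IH1|apply: IH2|apply: crefl].
- by case=> ys [Hys ->]; exists ys; split; [move=> y /Hys /IH1|apply: crefl].
Qed.

Lemma rsem_E_eq r x : rsem rho (@rmul k) (rone k) r x ->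
  exists x0, rsem (@eq (RL k)) (@rmul k) (rone k) r x0 /\ rho x x0.
Proof.
elim: r x => [|a|r1 IH1 r2 IH2|r1 IH1 r2 IH2|r1 IH1] x /=.
- by [].
- by move=> H; exists a.
- case=> [/IH1|/IH2] [x0 [H1 H2]]; exists x0; split => //; [left|right] => //.
- case=> y [z [/IH1 [y0 [Hy0 Ey]] /IH2 [z0 [Hz0 Ez]] Ex]].
  exists (rmul y0 z0); split; first by exists y0, z0.
  by apply: (ctrans HR Ex); apply: rmul_c.
- case=> ys [Hys Ex].
  have [ys0 [Hys0 E]] : exists ys0, (forall y, List.In y ys0 -> rsem (@eq (RL k)) (@rmul k) (rone k) r1 y)
       /\ rho (foldr (@rmul k) (rone k) ys) (foldr (@rmul k) (rone k) ys0).
    elim: ys Hys {Ex} => [|y ys IH] Hys; first by exists [::]; split => //; apply: crefl.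
    have [y0 [Hy0 Ey]] := IH1 _ (Hys y (or_introl erefl)).
    have [ys0 [Hys0 E]] := IH (fun y' H => Hys y' (or_intror H)).
    exists (y0 :: ys0); split; first by move=> y' [<-|H] //; apply: Hys0.
    by apply: rmul_c.
  exists (foldr (@rmul k) (rone k) ys0); split; first by exists ys0.
  exact: (ctrans HR Ex E).
Qed.
End RsemE.

Section GMorph.
Variable m : nat.
Hypothesis Hm : 0 < m.

Let rhoG (x y : RL m) := rho_k (G x) (G y).

Lemma G_mul (x y : RL m) : G (rmul x y) = rmul (G x) (G y). Proof. exact: gmap_mul. Qed.
Lemma G_one : G (rone m) = rone 2. Proof. exact: gmap_one. Qed.
Lemma G_add (x y : RL m) : G (radd x y) = radd (G x) (G y). Proof. exact: gmap_add. Qed.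
Lemma G_zero : G (rzero m) = rzero 2. Proof. exact: gmap_zero. Qed.

Let HR2 := @rho_k_cong 2.
Let HB2 := @rho_k_braket 2.

Lemma G_sup_le (r : rexp (RL m)) s u :
  (forall w, sval s w <-> exists a, rsem (@eq (RL m)) (@rmul m) (rone m) r a /\ sval a w) ->
  (forall a, rsem (@eq (RL m)) (@rmul m) (rone m) r a -> le (@rho_k 2) (G a) u) ->
  le (@rho_k 2) (G s) u.
Proof.
move=> Hs Hub.
have HRm := rsem_map (fun a b => G_mul a b) G_one r.
apply: (SUP HR2 (r := rmap (@G m) r)).
- move=> w; rewrite sval_gmap; split.
  + case=> v [/Hs [a [Ha Hav]] ->]; exists (G a); split; first by apply/HRm; exists a.
    by exists v.
  + by case=> a' [/HRm [a [Ha ->]] [v [Hv ->]]]; exists v; split => //; apply/Hs; exists a.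
- by move=> a' /HRm [a [Ha ->]]; apply: Hub.
Qed.

Lemma rhoG_cong : R_congruence rhoG.
Proof.
split.
- by move=> x; apply: (crefl HR2).
- by move=> x y; apply: (csym HR2).
- by move=> x y z; apply: (ctrans HR2).
- by move=> a a' b b' Ha Hb; rewrite /rhoG !G_add !G_mul; split; [apply: (radd_c HR2)|apply: (rmul_c HR2)].
- move=> A B HA HB Hdc s t Hs Ht.
  have key : forall (A B : RL m -> Prop) s t, regular_subset (@eq (RL m)) (@rmul m) (rone m) A ->
      regular_subset (@eq (RL m)) (@rmul m) (rone m) B ->
      is_sup (@eq (RL m)) (@radd m) A s -> is_sup (@eq (RL m)) (@radd m) B t ->
      (forall x, downclosure rhoG A x -> downclosure rhoG B x) -> le (@rho_k 2) (G s) (G t).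
    move=> A' B' s' t' HA' HB' Hs' Ht' Hd.
    have [r Hr] := HA'.
    apply: (G_sup_le (r := r)).
    + move=> w; rewrite (sup_union HA' Hs'); split; case=> a [Ha H]; exists a; split => //; exact/Hr.
    + move=> a /Hr Ha.
      have [b [Hb Hab]] : downclosure rhoG B' a.
        apply: Hd; exists a; split => //; rewrite /rhoG raddxx; exact: (crefl HR2).
      move: Hab; rewrite /rhoG G_add => Hab.
      apply: (cle_trans HR2 Hab); apply: (cle_sub HR2) => w; apply: gmap_sub => v Hv.
      by apply/(sup_union HB' Ht'); exists b.
  rewrite /rhoG; apply: (cle_antisym HR2).
  + by apply: key HA HB Hs Ht _ => x; exact: (proj1 (Hdc x)).
  + by apply: key HB HA Ht Hs _ => x; exact: (proj2 (Hdc x)).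
Qed.

Lemma rhoG_braket : contains_braket rhoG.
Proof.
split.
- move=> i j; rewrite /rhoG G_mul /kdelta; apply: (ctrans HR2 (G_braket HR2 HB2 i j)).
  by case: (i == j); rewrite ?G_one ?G_zero; apply: (crefl HR2).
- by rewrite /rhoG G_one; apply: G_sum.
Qed.

Lemma G_mono (x y : RL m) : rho_k x y -> rho_k (G x) (G y).
Proof. by move=> H; apply: (H rhoG rhoG_cong rhoG_braket). Qed.

Lemma G_Rmorphism : R_morphism (@G m).
Proof.
split; first exact: G_mono.
split.
- by rewrite G_zero; apply: (crefl HR2).
- by rewrite G_one; apply: (crefl HR2).
- by move=> x y; rewrite G_add; apply: (crefl HR2).
- by move=> x y; rewrite G_mul; apply: (crefl HR2).
- move=> A [r Hr] s [Hs1 Hs2].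
  have HRm := @rho_k_cong m.
  pose S := bigU r.
  have HS : forall w, sval S w <-> exists a, rsem (@eq (RL m)) (@rmul m) (rone m) r a /\ sval a w.
    by [].
  have EsS : rho_k s S.
    apply: (cle_antisym HRm).
    + apply: Hs2 => a /Hr /(rsem_E_eq HRm) [a0 [Ha0 E]].
      apply: (cle_rhol HRm E); apply: (cle_sub HRm) => w Hw; apply/HS; by exists a0.
    + apply: (SUP HRm HS) => a0 Ha0; apply: Hs1; apply/Hr; exact: rsem_eq_E.
  split.
  + move=> y [x Hx Ey]; apply: (cle_rhol HR2 Ey).
    have := G_mono (Hs1 x Hx); rewrite G_add; exact.
  + move=> u Hu; apply: (cle_rhol HR2 (G_mono EsS)).
    apply: (G_sup_le (r := r)) => // a0 Ha0; apply: Hu; exists a0 => //; last exact: (crefl HR2).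
    by apply/Hr; apply: rsem_eq_E.
Qed.

End GMorph.

From Stdlib Require Import FunctionalExtensionality ZArith Lia.
Set Implicit Arguments. Unset Strict Implicit. Unset Printing Implicit Defensive.

Definition pt := ((nat -> 'I_2) * Z)%type.

Definition app (l : seq 'I_2) (z : nat -> 'I_2) : nat -> 'I_2 :=
  fun n => if n < size l then nth b0 l n else z (n - size l).

Lemma app_nil z : app [::] z = z.
Proof. by apply: functional_extensionality => n; rewrite /app /= subn0. Qed.

Lemma app_cat l1 l2 z : app (l1 ++ l2) z = app l1 (app l2 z).
Proof.
apply: functional_extensionality => n; rewrite /app size_cat nth_cat.
case: (ltnP n (size l1)) => H1; first by rewrite (leq_trans H1 (leq_addr _ _)).
rewrite ltn_subLR // -subnDA.
by case: (n < size l1 + size l2).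
Qed.

Lemma app_inj_same l z1 z2 : app l z1 = app l z2 -> z1 = z2.
Proof.
move=> E; apply: functional_extensionality => n.
have := congr1 (fun f => f (n + size l)) E; rewrite /app /=.
by rewrite ltnNge leq_addl /= addnK.
Qed.

Lemma app_eq_len l1 l2 z1 z2 : size l1 = size l2 -> app l1 z1 = app l2 z2 -> l1 = l2 /\ z1 = z2.
Proof.
move=> Hs E.
have El : l1 = l2.
  apply: (@eq_from_nth _ b0) => // i Hi.
  have := congr1 (fun f => f i) E; rewrite /app /= Hi -Hs Hi; exact.
by split => //; subst l2; apply: app_inj_same E.
Qed.

Definition step (x : Delta 2) (s t : pt) : Prop :=
  match x with
  | inl i => t = (app [:: i] s.1, (s.2 + 1)%Z)
  | inr i => s = (app [:: i] t.1, (t.2 + 1)%Z)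
  end.

Fixpoint wrel (w : seq (Delta 2)) (s t : pt) : Prop :=
  match w with
  | [::] => s = t
  | x :: w' => exists r, step x s r /\ wrel w' r t
  end.

Definition lrel (L : lang 2) (s t : pt) := exists w, L w /\ wrel w s t.

Lemma wrel_cat a b s t : wrel (a ++ b) s t <-> exists r, wrel a s r /\ wrel b r t.
Proof.
elim: a s => [|x a IH] s /=; first by split; [exists s|case=> r [-> H]].
split.
- by case=> r [Hx /IH [r' [H1 H2]]]; exists r'; split => //; exists r.
- by case=> r' [[r [Hx H1]] H2]; exists r; split => //; apply/IH; exists r'.
Qed.

Lemma wrel_Qw (l : seq 'I_2) s t : wrel (Qw l) s t <-> s = (app l t.1, (t.2 + Z.of_nat (size l))%Z).
Proof.
elim: l s => [|i l IH] s /=.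
- by rewrite app_nil Z.add_0_r; case: s; case: t.
- split.
  + case=> r [-> H]; rewrite (proj1 (IH r) H) /= -app_cat /=; congr pair; lia.
  + move=> ->; exists (app l t.1, (t.2 + Z.of_nat (size l))%Z); split; last exact: (proj2 (IH _)).
    by rewrite /= -app_cat; congr pair; lia.
Qed.

Lemma wrel_Pw (l : seq 'I_2) s t : wrel (Pw l) s t <-> t = (app (rev l) s.1, (s.2 + Z.of_nat (size l))%Z).
Proof.
elim: l s t => [|i l IH] s t /=.
- by rewrite app_nil Z.add_0_r; case: s; case: t; split => // ->.
- split.
  + case=> r [-> H]; rewrite (proj1 (IH _ _) H) /= rev_cons -cats1 app_cat; congr pair; lia.
  + move=> ->; exists (app [:: i] s.1, (s.2 + 1)%Z); split => //; apply: (proj2 (IH _ _)).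
    by rewrite /= rev_cons -cats1 app_cat; congr pair; lia.
Qed.

Lemma lrel_sing w s t : lrel (sval (sing w)) s t <-> wrel w s t.
Proof. by split; [case=> w' [-> H]|move=> H; exists w]. Qed.

Lemma lrel_add (x y : RL 2) s t : lrel (sval (radd x y)) s t <-> lrel (sval x) s t \/ lrel (sval y) s t.
Proof.
split; first by case=> w [[H|H] Hw]; [left|right]; exists w.
by case=> [[w [H Hw]]|[w [H Hw]]]; exists w; split => //; [left|right].
Qed.

Lemma lrel_mul (x y : RL 2) s t : lrel (sval (rmul x y)) s t <-> exists r, lrel (sval x) s r /\ lrel (sval y) r t.
Proof.
split.
- case=> w [[a [b [Ha Hb ->]]] /wrel_cat [r [H1 H2]]].
  by exists r; split; [exists a|exists b].
- case=> r [[a [Ha H1]] [b [Hb H2]]]; exists (a ++ b); split; first by exists a, b.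
  by apply/wrel_cat; exists r.
Qed.

Definition mker (x y : RL 2) := forall s t, lrel (sval x) s t <-> lrel (sval y) s t.

Lemma mker_cong : R_congruence mker.
Proof.
split.
- by [].
- by move=> x y H s t; rewrite H.
- by move=> x y z H1 H2 s t; rewrite H1 H2.
- move=> a a' b b' Ha Hb; split => s t.
  + by rewrite !lrel_add Ha Hb.
  + by rewrite !lrel_mul; split; case=> r [H1 H2]; exists r; split; rewrite ?Ha ?Hb // -?Ha -?Hb.
- move=> A B HA HB Hdc s t Hs Ht.
  have cof : forall (A B : RL 2 -> Prop) s t, regular_subset (@eq (RL 2)) (@rmul 2) (rone 2) A ->
      regular_subset (@eq (RL 2)) (@rmul 2) (rone 2) B ->
      is_sup (@eq (RL 2)) (@radd 2) A s -> is_sup (@eq (RL 2)) (@radd 2) B t ->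
      (forall x, downclosure mker A x -> downclosure mker B x) ->
      forall p q, lrel (sval s) p q -> lrel (sval t) p q.
    move=> A' B' s' t' HA' HB' Hs' Ht' Hd p q [w [/(sup_union HA' Hs') [a [Ha Haw]] Hw]].
    have [b [Hb Hab]] : downclosure mker B' a.
      by apply: Hd; exists a; split => //; rewrite raddxx.
    have : lrel (sval (radd a b)) p q by apply/lrel_add; left; exists w.
    rewrite Hab => [[w' [Hw' Hw'']]]; exists w'; split => //.
    by apply/(sup_union HB' Ht'); exists b.
  move=> p q; split; apply: cof => //; [exact: HA|exact: HB|exact: Hs|exact: Ht| |exact: HB|exact: HA|exact: Ht|exact: Hs|];
    move=> x; [exact: (proj1 (Hdc x))|exact: (proj2 (Hdc x))].
Qed.

Lemma app1_inj i j z1 z2 : app [:: i] z1 = app [:: j] z2 -> i = j /\ z1 = z2.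
Proof. by move=> E; have [[->] ->] := app_eq_len (l1 := [:: i]) (l2 := [:: j]) erefl E. Qed.

Lemma pt_decomp (s : pt) : s = (app [:: s.1 0] (fun n => s.1 n.+1), ((s.2 - 1) + 1)%Z).
Proof.
case: s => z p /=; congr pair; last lia.
apply: functional_extensionality => n; rewrite /app /=.
by case: n => //= n; rewrite subn1.
Qed.

Lemma mker_braket : contains_braket mker.
Proof.
split.
- move=> i j s t; rewrite /rp /rq -/(sing _) -/(sing _) sing_cat lrel_sing /kdelta.
  case: (eqVneq i j) => [<-|Hij] /=.
  + split.
    * case=> r [Er [r' [E Er']]]; subst r r'; apply/lrel_sing.
      case: E => /app1_inj [_ E1] E2; case: s E1 E2 => z p; case: t => z' p' /= -> E2.
      congr pair; lia.
    * move=> /lrel_sing ->; exists (app [:: i] t.1, (t.2 + 1)%Z); split => //.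
      by exists t.
  + split => //; last by case=> w [].
    case=> r [Er [r' [E _]]]; subst r; case: E => /app1_inj [Eij _] _; by rewrite Eij eqxx in Hij.
- move=> s t; rewrite /sum_qp; split.
  + case=> w [/sval_big [i [_ Hw]] Hwst].
    move: Hw Hwst; rewrite /rp /rq -/(sing _) -/(sing _) sing_cat /= => -> /=.
    case=> r [Er [r' [Er' Er'']]]; subst; by apply/lrel_sing.
  + move=> /lrel_sing ->.
    exists [:: inr (t.1 0); inl (t.1 0)]; split.
      apply/sval_big; exists (t.1 0); split; first exact: In_enum.
      by rewrite /rp /rq -/(sing _) -/(sing _) sing_cat.
    exists (fun n => t.1 n.+1, (t.2 - 1)%Z); split; first exact: pt_decomp.
    by exists t; split => //; rewrite /step -(pt_decomp t).
Qed.

Lemma rho_k_mker (x y : RL 2) : rho_k x y -> mker x y.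
Proof. by move=> H; apply: H; [exact: mker_cong|exact: mker_braket]. Qed.

From mathcomp Require Import zify.
From Stdlib Require Import FunctionalExtensionality ZArith Lia Classical ClassicalEpsilon.
Set Implicit Arguments. Unset Strict Implicit. Unset Printing Implicit Defensive.

Section Parse.
Variable m : nat.
Hypothesis Hm : 1 < m.

Definition Ec (u : seq 'I_m) : seq 'I_2 := flatten (map (@code m) u).

Lemma Ec_cat a b : Ec (a ++ b) = Ec a ++ Ec b.
Proof. by rewrite /Ec map_cat flatten_cat. Qed.

Lemma code_neq0 (i : 'I_m) : 0 < size (code i).
Proof.
rewrite /code; case: ifP => H; first by rewrite size_rcons.
rewrite size_nseq; move/negbT: H; rewrite -leqNgt; have := ltn_ord i; lia.
Qed.

Lemma nth_code_lt (i : 'I_m) n : n < i -> n < size (code i) /\ nth b0 (code i) n = b1.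
Proof.
move=> Hn; rewrite /code; case: ifP => _.
- by rewrite size_rcons size_nseq nth_rcons size_nseq Hn nth_nseq Hn ltnS ltnW.
- by rewrite size_nseq nth_nseq Hn.
Qed.

Lemma code_prefix (i j : 'I_m) z1 z2 : app (code i) z1 = app (code j) z2 -> i = j /\ z1 = z2.
Proof.
have key : forall (i j : 'I_m) z1 z2, i < j -> app (code i) z1 <> app (code j) z2.
  move=> i' j' z1' z2' Hij E.
  have [Ei [d Ej]] := code_lt Hij.
  have := congr1 (fun f => f (nat_of_ord i')) E; rewrite /app Ei Ej !size_cat size_nseq /= addn1 ltnS leqnn.
  rewrite -[X in X < _]addn0 ltn_add2l /= !nth_cat size_nseq ltnn subnn /=.
  by move/eqP; rewrite /b0 /b1.
move=> E; have Eij : i = j.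
  case: (ltngtP i j) => H; [by case: (key _ _ _ _ H E)|by case: (key _ _ _ _ H (esym E))|].
  exact: val_inj.
by subst j; split => //; apply: app_inj_same E.
Qed.

Lemma parse a b z1 z2 : app (Ec a) z1 = app (Ec b) z2 ->
  (exists s, a = b ++ s /\ z2 = app (Ec s) z1) \/ (exists s, b = a ++ s /\ z1 = app (Ec s) z2).
Proof.
elim: a b => [|i a IH] b.
  by rewrite {1}/Ec /= app_nil => E; right; exists b.
case: b => [|j b].
  by rewrite {2}/Ec /= app_nil => E; left; exists (i :: a); rewrite E.
rewrite /Ec /= !app_cat -/(Ec a) -/(Ec b) => /code_prefix [<- /IH].
case=> [[s [-> ->]]|[s [-> ->]]]; [left|right]; by exists s.
Qed.

Lemma Ec_inj a b : Ec a = Ec b -> a = b.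
Proof.
elim: a b => [|i a IH] [|j b] //.
- by rewrite /Ec /= => /(congr1 size); rewrite size_cat /=; have := code_neq0 j; lia.
- by rewrite /Ec /= => /(congr1 size); rewrite size_cat /=; have := code_neq0 i; lia.
- rewrite /Ec /= -/(Ec a) -/(Ec b) => E.
  have := congr1 (fun l => app l (fun _ => b0)) E; rewrite /= !app_cat => /code_prefix [Eij _].
  subst j; move: E => /(congr1 (drop (size (code i)))); rewrite !drop_size_cat // => /IH ->.
  by [].
Qed.

Fixpoint cfuel (f : nat) (t : nat -> 'I_m) (n : nat) : 'I_2 :=
  match f with
  | 0 => b0
  | f'.+1 => if n < size (code (t 0)) then nth b0 (code (t 0)) n
             else cfuel f' (fun i => t i.+1) (n - size (code (t 0)))
  end.

Definition cinf t n := cfuel n.+1 t n.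

Lemma cfuel_irr f1 f2 t n : n < f1 -> n < f2 -> cfuel f1 t n = cfuel f2 t n.
Proof.
elim: f1 f2 t n => [|f1 IH] [|f2] t n //= H1 H2.
case: ifP => // Hn; apply: IH; move/negbT: Hn; have := code_neq0 (t 0); lia.
Qed.

Lemma cinf_unfold t : cinf t = app (code (t 0)) (cinf (fun i => t i.+1)).
Proof.
apply: functional_extensionality => n; rewrite /cinf /app.
change (cfuel n.+1 t n) with (if n < size (code (t 0)) then nth b0 (code (t 0)) n
   else cfuel n (fun i => t i.+1) (n - size (code (t 0)))).
case: ifP => // Hn; apply: cfuel_irr; move/negbT: Hn; have := code_neq0 (t 0); lia.
Qed.

Lemma cinf_pre t n : cinf t = app (Ec (mkseq t n)) (cinf (fun i => t (i + n))).
Proof.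
elim: n t => [|n IH] t.
  rewrite /= app_nil; congr cinf; apply: functional_extensionality => i; by rewrite addn0.
rewrite cinf_unfold IH /mkseq /=.
have -> : [seq t x | x <- iota 1 n] = [seq t x.+1 | x <- iota 0 n].
  by rewrite -(addn0 1) iotaDl -map_comp.
rewrite /Ec /= app_cat; congr app; congr app; congr cinf.
by apply: functional_extensionality => i; rewrite addnS.
Qed.

End Parse.

From mathcomp Require Import zify.
From Stdlib Require Import FunctionalExtensionality ZArith Lia Classical ClassicalEpsilon.
Set Implicit Arguments. Unset Strict Implicit. Unset Printing Implicit Defensive.

Section Main.
Variable m : nat.
Hypothesis Hm : 1 < m.
Let Hm0 : 0 < m. Proof. by apply: ltnW. Qed.

Lemma hom_QP (u v : seq 'I_m) :
  hom (@fg m) (Qw u ++ Pw v) = Qw (Ec u) ++ Pw (flatten (map (fun i => rev (code i)) v)).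
Proof.
by rewrite hom_cat /hom /Qw /Pw /Ec !map_flatten -!map_comp.
Qed.

Lemma rev_flat (v : seq 'I_m) : rev (flatten (map (fun i => rev (code i)) v)) = Ec (rev v).
Proof.
elim: v => [|i v IH] //=; rewrite rev_cat IH rev_cons revK /Ec map_rcons.
by rewrite -cats1 flatten_cat /= cats0.
Qed.

Lemma wrel_QP (u v : seq 'I_m) s t :
  wrel (hom (@fg m) (Qw u ++ Pw v)) s t <->
  exists r : pt, s = (app (Ec u) r.1, (r.2 + Z.of_nat (size (Ec u)))%Z) /\
                 t = (app (Ec (rev v)) r.1, (r.2 + Z.of_nat (size (Ec (rev v))))%Z).
Proof.
rewrite hom_QP wrel_cat; split.
- case=> r [/wrel_Qw -> /wrel_Pw ->]; exists r; split => //.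
  by rewrite rev_flat -(size_rev (flatten _)) rev_flat.
- case=> r [-> ->]; exists r; split; first exact/wrel_Qw.
  by apply/wrel_Pw; rewrite rev_flat -(size_rev (flatten _)) rev_flat.
Qed.

Lemma lrel_G (x : RL m) s t : lrel (sval (G x)) s t <-> exists w, sval x w /\ wrel (hom (@fg m) w) s t.
Proof.
split; first by case=> w' [[w [Hw ->]] H]; exists w.
by case=> w [Hw H]; exists (hom (@fg m) w); split => //; exists w.
Qed.

Lemma G_nf (w : seq (Delta m)) : mker (G (sing w)) (G (nfsem (nf w))).
Proof.
apply: rho_k_mker; apply: (G_mono Hm0).
exact: (nf_ok (@rho_k_cong m) (@rho_k_braket m)).
Qed.

Section Rho.
Variable rho : RL m -> RL m -> Prop.
Hypothesis HR : R_congruence rho.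
Hypothesis HB : contains_braket rho.

Lemma compact (u v : seq 'I_m) (y : RL m) :
  (forall s t, wrel (hom (@fg m) (Qw u ++ Pw v)) s t -> lrel (sval (G y)) s t) ->
  le rho (sing (Qw u ++ Pw v)) y.
Proof.
move=> Hyp; apply: NNPP => Hbad0.
pose bad := fun s : seq 'I_m => ~ le rho (sing (Qw (u ++ s) ++ Pw (rev s ++ v))) y.
have bstep : forall s, bad s -> exists i, bad (rcons s i).
  move=> s Hs; apply: NNPP => Hn; apply: Hs.
  apply: (cle_rhol HR (expandQP HR HB _ _)); apply: (cle_big HR) => i _.
  apply: NNPP => Hi; apply: Hn; exists i; rewrite /bad rev_rcons -rcons_cat /=; exact: Hi.
pose i0 : 'I_m := Ordinal Hm0.
pose ch := fun s : seq 'I_m => epsilon (inhabits i0) (fun i => bad (rcons s i)).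
pose pre := fun n : nat => ssrnat.iter n (fun s : seq 'I_m => rcons s (ch s)) [::].
have badpre : forall n, bad (pre n).
  elim=> [|n IH]; first by rewrite /bad /= cats0.
  exact: (epsilon_spec (inhabits i0) (fun i => bad (rcons (pre n) i)) (bstep _ IH)).
pose t n := ch (pre n).
have Hpre : forall n, mkseq t n = pre n.
  by elim=> [|n IH] //; rewrite mkseqS IH.
pose z := cinf t.
pose s0 : pt := (app (Ec u) z, Z.of_nat (size (Ec u))).
pose t0 : pt := (app (Ec (rev v)) z, Z.of_nat (size (Ec (rev v)))).
have H0 : wrel (hom (@fg m) (Qw u ++ Pw v)) s0 t0.
  by apply/wrel_QP; exists (z, 0%Z).
have [w' [Hw' Hw's]] := proj1 (lrel_G y s0 t0) (Hyp _ _ H0).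
have : lrel (sval (G (nfsem (nf w')))) s0 t0.
  by apply/G_nf; apply/lrel_G; exists w'.
have Hle' : le rho (nfsem (nf w')) y.
  apply: (cle_rhol HR (csym HR (nf_ok HR HB w'))); apply: (cle_sub HR) => w'' ->; exact: Hw'.
case: (nf w') Hle' => [[u' vr']|] Hle'; last first.
  by change (nfsem None) with (rzero m); rewrite G_zero; case=> ? [[]].
change (nfsem (Some (u', vr'))) with (sing (Qw u' ++ Pw (rev vr'))) in Hle' |- *.
rewrite G_sing; move/lrel_sing/wrel_QP => [r [Es Et]].
set v' := rev vr' in Hle' Et.
case: Es => Es1 Es2; case: Et => Et1 Et2.
case: (parse Es1) => [[s1 [Eu Ez]]|[s1 [Eu Ez]]].
-
  apply: Hbad0.
  have Hsz : size (Ec (rev v)) = size (Ec (rev v' ++ s1)).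
    move: Es2 Et2; rewrite Eu !Ec_cat !size_cat; lia.
  move: Et1; rewrite Ez -app_cat -Ec_cat => /(app_eq_len Hsz) [/(Ec_inj Hm) Ev _].
  have -> : v = rev s1 ++ v' by rewrite -(revK v) Ev rev_cat revK.
  rewrite Eu; exact: (cle_trans HR (le_ext HR HB u' v' s1) Hle').
-
  have Hsz : size (Ec (rev v ++ s1)) = size (Ec (rev v')).
    move: Es2 Et2; rewrite Eu !Ec_cat !size_cat; lia.
  move: Et1; rewrite Ez -app_cat -Ec_cat => /(app_eq_len Hsz) [/(Ec_inj Hm) Ev _].
  have Ev' : v' = rev s1 ++ v by rewrite -(revK v') -Ev rev_cat revK.
  have Es1pre : s1 = pre (size s1).
    move: Ez; rewrite /z (cinf_pre Hm t (size s1)) Hpre => /esym /parse.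
    have Hs : size (pre (size s1)) = size s1 by rewrite -Hpre size_mkseq.
    case=> [[s' [E1 _]]|[s' [E1 _]]];
      (have Hs' : s' = [::] by move: (congr1 size E1); rewrite size_cat ?Hs;
         case: s' {E1} => //= ? ?; lia);
      by rewrite Hs' cats0 in E1.
  apply: (badpre (size s1)); rewrite -Es1pre -Eu -Ev'; exact: Hle'.
Qed.



Lemma faithful (x y : RL m) :
  (forall s t, lrel (sval (G x)) s t -> lrel (sval (G y)) s t) -> le rho x y.
Proof.
move=> Hxy; apply: (GSUP HR) => w Hw.
apply: (cle_rhol HR (nf_ok HR HB w)).
have Hw' : forall s t, lrel (sval (G (nfsem (nf w)))) s t -> lrel (sval (G y)) s t.
  move=> s t H; have := proj2 (G_nf w s t) H; case/lrel_G => w0 [Ew0 H0].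
  by apply: Hxy; apply/lrel_G; exists w0; split => //; rewrite Ew0.
case: (nf w) Hw' => [[u vr]|] Hw'; last exact: cle_zero.
change (nfsem (Some (u, vr))) with (sing (Qw u ++ Pw (rev vr))) in Hw' |- *.
apply: compact => s t H; apply: Hw'; rewrite G_sing; exact/lrel_sing.
Qed.

End Rho.

Lemma G_inj : C_injective (@G m).
Proof.
move=> x y /rho_k_mker H rho HR HB.
apply: (cle_antisym HR); apply: faithful => // s t; rewrite H //.
Qed.

End Main.

Theorem prop6 (m : nat) : 2 < m ->
  exists g : RL m -> RL 2,
    [/\ R_morphism g, C_injective g,
        (forall i j : 'I_m, rho_k (rmul (g (rp i)) (g (rq j))) (if i == j then rone 2 else rzero 2))
      & rho_k (g (sum_qp m)) (rone 2)].
Proof.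
move=> Hm; have Hm1 : 1 < m by apply: ltnW.
have Hm0 : 0 < m by apply: ltnW.
exists (@G m); split.
- exact: G_Rmorphism.
- exact: G_inj.
- by move=> i j; apply: G_braket; [exact: rho_k_cong|exact: rho_k_braket].
- by apply: G_sum => //; [exact: rho_k_cong|exact: rho_k_braket].
Qed.


Theorem proposition6 (m : nat) : 2 < m ->
  exists g : RL m -> RL 2,
    [/\ R_morphism g, C_injective g,
        (forall i j : 'I_m, rho_k (rmul (g (rp i)) (g (rq j))) (if i == j then rone 2 else rzero 2))
      & rho_k (g (sum_qp m)) (rone 2)].
Proof. exact: prop6. Qed.
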